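(* For a finite set $R$ of pairs $(r,s)$ of extended regular expressions (read as inequalities $r\mathrel{\dot\sqsubseteq}s$), define \[F(R)=R\cup\{(\nabla_A(r),\Delta_A(s))\mid (r,s)\in R,\ A\in\mathrm{next}(r)\ltimes\mathrm{next}(s),\ A\neq\emptyset\}.\] Then for all extended regular expressions $r,s$, the set $\bigcup_{i\in\mathbb N}F^{(i)}(\{(r,s)\})$ contains only finitely many pairs up to componentwise similarity.
   Context: $\Sigma$ is a countable (possibly infinite) alphabet. Literals are sets of symbols drawn from a fixed family $U\subseteq\mathcal P(\Sigma)$ containing $\emptyset$, $\Sigma$ and all singletons and closed under union, intersection and complement $\overline{A}=\Sigma\setminus A$. Extended regular expressions (EREs) are generated by $r,s ::= \epsilon \mid A \mid r+s \mid r\cdot s \mid r^* \mid r\,\&\,s \mid \neg r$ with $A$ a literal; the empty literal is written $\emptyset$. Similarity is the smallest congruence on EREs containing $r+s\sim s+r$, $(r+s)+t\sim r+(s+t)$, $r+r\sim r$ and $r+\emptyset\sim r$. Nullability: $\nu(\epsilon)=\nu(r^* )=\mathit{true}$, $\nu(A)=\mathit{false}$, $\nu(r+s)=\nu(r)\vee\nu(s)$, $\nu(r\cdot s)=\nu(r\&s)=\nu(r)\wedge\nu(s)$, $\nu(\neg r)=\neg\nu(r)$. Positive and negative derivatives with respect to a nonempty literal $B$, by simultaneous recursion: $\Delta_B(\epsilon)=\nabla_B(\epsilon)=\emptyset$; $\Delta_B(A)=\epsilon$ if $A\cap B\neq\emptyset$, else $\emptyset$; $\nabla_B(A)=\epsilon$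 if $B\subseteq A$, else $\emptyset$; for $\square\in\{\Delta,\nabla\}$: $\square_B(r+s)=\square_B(r)+\square_B(s)$, $\square_B(r\cdot s)=\square_B(r)\cdot s+\square_B(s)$ if $\nu(r)$ and $\square_B(r)\cdot s$ otherwise, $\square_B(r^* )=\square_B(r)\cdot r^*$, $\square_B(r\&s)=\square_B(r)\&\square_B(s)$; $\Delta_B(\neg r)=\neg\nabla_B(r)$, $\nabla_B(\neg r)=\neg\Delta_B(r)$. Join: $\mathfrak L_1\Join\mathfrak L_2=\{A_1\cap A_2,\ A_1\cap\overline{\bigcup\mathfrak L_2},\ \overline{\bigcup\mathfrak L_1}\cap A_2 \mid A_1\in\mathfrak L_1, A_2\in\mathfrak L_2\}$; left join $\mathfrak L_1\ltimes\mathfrak L_2=\{A_1\cap A_2,\ A_1\cap\overline{\bigcup\mathfrak L_2}\mid A_1\in\mathfrak L_1, A_2\in\mathfrak L_2\}$; $\mathfrak L_1\sqcap\mathfrak L_2=\{A_1\cap A_2\mid A_1\in\mathfrak L_1,A_2\in\mathfrak L_2\}$. Next literals: $\mathrm{next}(\epsilon)=\{\emptyset\}$; $\mathrm{next}(A)=\{A\}$; $\mathrm{next}(r+s)=\mathrm{next}(r)\Join\mathrm{next}(s)$; $\mathrm{next}(r\cdot s)=\mathrm{next}(r)\Join\mathrm{next}(s)$ if $\nu(r)$ and $\mathrm{next}(r)$ otherwise; $\mathrm{next}(r^* )=\mathrm{next}(r)$; $\mathrm{next}(r\&s)=\mathrm{next}(r)\sqcap\mathrm{next}(s)$; $\mathrm{next}(\neg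 r)=\mathrm{next}(r)\cup\{\bigcap_{A\in\mathrm{next}(r)}\overline{A}\}$. *)

(* Defs.v *)
From Stdlib Require Import List ClassicalEpsilon.
Import ListNotations.
Set Implicit Arguments.

Definition countable (T : Type) : Prop :=
  exists f : T -> nat, forall x y, f x = f y -> x = y.

Definition lit (T : Type) := T -> Prop.
Definition lit0 {T} : lit T := fun _ => False.
Definition litT {T} : lit T := fun _ => True.
Definition litI {T} (A B : lit T) : lit T := fun x => A x /\ B x.
Definition litU {T} (A B : lit T) : lit T := fun x => A x \/ B x.
Definition litC {T} (A : lit T) : lit T := fun x => ~ A x.

Record literal_family (T : Type) (U : lit T -> Prop) : Prop := {
  lf_empty : U lit0;
  lf_full : U litT;
  lf_single : forall a : T, U (fun x => x = a);
  lf_union : forall A B, U A -> U B -> U (litU A B);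
  lf_inter : forall A B, U A -> U B -> U (litI A B);
  lf_compl : forall A, U A -> U (litC A)
}.

Inductive ere (T : Type) : Type :=
| Eps : ere T
| Lit : lit T -> ere T
| Plus : ere T -> ere T -> ere T
| Cat : ere T -> ere T -> ere T
| Star : ere T -> ere T
| And : ere T -> ere T -> ere T
| Neg : ere T -> ere T.
Arguments Eps {T}.

Fixpoint lits_in {T} (U : lit T -> Prop) (r : ere T) : Prop :=
  match r with
  | Eps => True
  | Lit A => U A
  | Plus r s | Cat r s | And r s => lits_in U r /\ lits_in U s
  | Star r | Neg r => lits_in U r
  end.

Inductive sim {T} : ere T -> ere T -> Prop :=
| sim_refl r : sim r r
| sim_sym r s : sim r s -> sim s r
| sim_trans r s t : sim r s -> sim s t -> sim r t
| sim_comm r s : sim (Plus r s) (Plus s r)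
| sim_assoc r s t : sim (Plus (Plus r s) t) (Plus r (Plus s t))
| sim_idem r : sim (Plus r r) r
| sim_unit r : sim (Plus r (Lit lit0)) r
| sim_Plus r r' s s' : sim r r' -> sim s s' -> sim (Plus r s) (Plus r' s')
| sim_Cat r r' s s' : sim r r' -> sim s s' -> sim (Cat r s) (Cat r' s')
| sim_And r r' s s' : sim r r' -> sim s s' -> sim (And r s) (And r' s')
| sim_Star r r' : sim r r' -> sim (Star r) (Star r')
| sim_Neg r r' : sim r r' -> sim (Neg r) (Neg r').

Fixpoint nu {T} (r : ere T) : bool :=
  match r with
  | Eps => true
  | Lit _ => false
  | Plus r s => nu r || nu s
  | Cat r s | And r s => nu r && nu s
  | Star _ => true
  | Neg r => negb (nu r)
  end.

Definition pdec (P : Prop) : bool :=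
  if excluded_middle_informative P then true else false.

(* der true B = positive derivative Delta_B ; der false B = negative nabla_B *)
Fixpoint der {T} (pos : bool) (B : lit T) (r : ere T) : ere T :=
  match r with
  | Eps => Lit lit0
  | Lit A =>
      if pos then (if pdec (exists x, A x /\ B x) then Eps else Lit lit0)
      else (if pdec (forall x, B x -> A x) then Eps else Lit lit0)
  | Plus r s => Plus (der pos B r) (der pos B s)
  | Cat r s => if nu r then Plus (Cat (der pos B r) s) (der pos B s)
               else Cat (der pos B r) s
  | Star r => Cat (der pos B r) (Star r)
  | And r s => And (der pos B r) (der pos B s)
  | Neg r => Neg (der (negb pos) B r)
  end.

Definition Delta {T} (B : lit T) := der true B.
Definition Nabla {T} (B : lit T) := der false B.

(* finite sets of literals represented by lists *)
Definition bigU {T} (L : list (lit T)) : lit T := fun x => exists A, In A L /\ A x.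
Definition bigIC {T} (L : list (lit T)) : lit T := fun x => forall A, In A L -> ~ A x.

Definition ljoin {T} (L1 L2 : list (lit T)) : list (lit T) :=
  flat_map (fun A1 => flat_map (fun A2 =>
    [litI A1 A2; litI A1 (litC (bigU L2)); litI (litC (bigU L1)) A2]) L2) L1.

Definition lleftjoin {T} (L1 L2 : list (lit T)) : list (lit T) :=
  flat_map (fun A1 => flat_map (fun A2 =>
    [litI A1 A2; litI A1 (litC (bigU L2))]) L2) L1.

Definition lmeet {T} (L1 L2 : list (lit T)) : list (lit T) :=
  flat_map (fun A1 => map (fun A2 => litI A1 A2) L2) L1.

Fixpoint next {T} (r : ere T) : list (lit T) :=
  match r with
  | Eps => [lit0]
  | Lit A => [A]
  | Plus r s => ljoin (next r) (next s)
  | Cat r s => if nu r then ljoin (next r) (next s) else next r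
  | Star r => next r
  | And r s => lmeet (next r) (next s)
  | Neg r => next r ++ [bigIC (next r)]
  end.

Definition pairset T := (ere T * ere T) -> Prop.

Definition Fstep {T} (R : pairset T) : pairset T := fun p =>
  R p \/
  exists r s A, R (r, s) /\ In A (lleftjoin (next r) (next s)) /\
                A <> lit0 /\ p = (Nabla A r, Delta A s).

Fixpoint Fiter {T} (i : nat) (R : pairset T) : pairset T :=
  match i with 0 => R | S i => Fstep (Fiter i R) end.

Definition Funion {T} (r s : ere T) : pairset T :=
  fun p => exists i, Fiter i (fun q => q = (r, s)) p.

Definition finite_up_to_sim {T} (P : pairset T) : Prop :=
  exists L : list (ere T * ere T),
    forall p, P p -> exists q, In q L /\ sim (fst p) (fst q) /\ sim (snd p) (snd q).

(* Main.v *)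
Require Import Defs.
From Stdlib Require Import List.
From Stdlib Require Import Classical ClassicalEpsilon FunctionalExtensionality PropExtensionality.
Import ListNotations.

Lemma der_lit0 {T} pos (B : lit T) : (exists x, B x) -> der pos B (Lit lit0) = Lit lit0.
Proof.
  intros [x Hx]; destruct pos; simpl; unfold pdec;
  destruct excluded_middle_informative as [H|H]; auto.
  - destruct H as [y [[] _]].
  - exfalso; exact (H x Hx).
Qed.

Lemma nu_sim {T} (r r' : ere T) : sim r r' -> nu r = nu r'.
Proof.
  induction 1; simpl; try congruence.
  - destruct (nu r), (nu s); reflexivity.
  - destruct (nu r), (nu s), (nu t); reflexivity.
  - destruct (nu r); reflexivity.
  - destruct (nu r); reflexivity.
Qed.
Arguments nu_sim {T} [_ _] _.

Lemma der_sim {T} (r r' : ere T) : sim r r' ->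
  forall pos B, (exists x, B x) -> sim (der pos B r) (der pos B r').
Proof.
  induction 1; intros pos B HB; simpl.
  - apply sim_refl.
  - apply sim_sym; auto.
  - eapply sim_trans; eauto.
  - apply sim_comm.
  - apply sim_assoc.
  - apply sim_idem.
  - change (sim (Plus (der pos B r) (der pos B (Lit lit0))) (der pos B r)).
    rewrite (der_lit0 pos B HB). apply sim_unit.
  - apply sim_Plus; auto.
  - rewrite (nu_sim H). destruct (nu r').
    + apply sim_Plus; auto. apply sim_Cat; auto.
    + apply sim_Cat; auto.
  - apply sim_And; auto.
  - apply sim_Cat; auto. apply sim_Star; auto.
  - apply sim_Neg; auto.
Qed.
Arguments der_sim {T} [r r'] _ _ [B] _.

Fixpoint sumL {T} (l : list (ere T)) : ere T :=
  match l with [] => Lit lit0 | x :: l => Plus x (sumL l) end.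

Lemma der_sumL {T} pos (B : lit T) l : (exists x, B x) ->
  der pos B (sumL l) = sumL (map (der pos B) l).
Proof.
  intros HB; induction l; [apply der_lit0; auto | simpl; congruence].
Qed.

Lemma sumL_app {T} (l1 l2 : list (ere T)) : sim (sumL (l1 ++ l2)) (Plus (sumL l1) (sumL l2)).
Proof.
  induction l1; simpl.
  - eapply sim_trans; [apply sim_sym, sim_unit|]. apply sim_comm.
  - eapply sim_trans; [apply sim_Plus; [apply sim_refl|apply IHl1]|].
    apply sim_sym, sim_assoc.
Qed.

Lemma sumL_congr {T} (l l' : list (ere T)) : Forall2 sim l l' -> sim (sumL l) (sumL l').
Proof. induction 1; simpl; [apply sim_refl| apply sim_Plus; auto]. Qed.
Arguments sumL_congr {T} [_ _] _.

Lemma sumL_absorb {T} (x : ere T) l : In x l -> sim (Plus x (sumL l)) (sumL l).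
Proof.
  induction l as [|y l IH]; simpl; [intros []|]. intros [<-|Hin].
  - eapply sim_trans; [apply sim_sym, sim_assoc|]. apply sim_Plus; [apply sim_idem|apply sim_refl].
  - eapply sim_trans; [apply sim_sym, sim_assoc|].
    eapply sim_trans; [apply sim_Plus; [apply sim_comm|apply sim_refl]|].
    eapply sim_trans; [apply sim_assoc|]. apply sim_Plus; [apply sim_refl|auto].
Qed.

Lemma sumL_incl {T} (l l' : list (ere T)) : incl l l' -> sim (Plus (sumL l) (sumL l')) (sumL l').
Proof.
  induction l as [|x l IH]; simpl; intros Hi.
  - eapply sim_trans; [apply sim_comm|apply sim_unit].
  - eapply sim_trans; [apply sim_assoc|].
    eapply sim_trans; [apply sim_Plus; [apply sim_refl| apply IH; intros y Hy; apply Hi; simpl; auto]|].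
    apply sumL_absorb. apply Hi; simpl; auto.
Qed.
Arguments sumL_incl {T} [_ _] _.

Lemma sumL_same {T} (l l' : list (ere T)) : incl l l' -> incl l' l -> sim (sumL l) (sumL l').
Proof.
  intros H1 H2. eapply sim_trans; [apply sim_sym, (sumL_incl H2)|].
  eapply sim_trans; [apply sim_comm|]. apply sumL_incl; auto.
Qed.
Arguments sumL_same {T} [_ _] _.

Fixpoint sublists {A} (L : list A) : list (list A) :=
  match L with [] => [[]] | x :: L => map (cons x) (sublists L) ++ sublists L end.

Lemma sublists_sel {A} (L : list A) (P : A -> Prop) :
  exists m, In m (sublists L) /\ forall y, In y m <-> (In y L /\ P y).
Proof.
  induction L as [|x L IH]; simpl.
  - exists []; split; auto. simpl; tauto.
  - destruct IH as [m [Hm Hy]]. destruct (classic (P x)) as [Px|Px].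
    + exists (x :: m); split. apply in_or_app; left; apply in_map; auto.
      intros y; simpl; rewrite Hy; split; [intros [<-|[]]; auto| intros [[<-|?] ?]; auto].
    + exists m; split. apply in_or_app; right; auto.
      intros y; rewrite Hy; split; [intros []; auto| intros [[<-|?] ?]; tauto].
Qed.

Definition fin_sim {T} (P : ere T -> Prop) : Prop :=
  exists L, forall t, P t -> exists q, In q L /\ sim t q.

Lemma fin_mono {T} (P Q : ere T -> Prop) : (forall t, P t -> Q t) -> fin_sim Q -> fin_sim P.
Proof. intros H [L HL]; exists L; auto. Qed.

Lemma fin_list {T} (L : list (ere T)) : fin_sim (fun t => In t L).
Proof. exists L; intros t Ht; exists t; split; auto; apply sim_refl. Qed.

Lemma fin_or {T} (P Q : ere T -> Prop) : fin_sim P -> fin_sim Q -> fin_sim (fun t => P t \/ Q t).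
Proof.
  intros [L1 H1] [L2 H2]; exists (L1 ++ L2); intros t [Ht|Ht].
  - destruct (H1 t Ht) as [q [? ?]]; exists q; split; auto; apply in_or_app; auto.
  - destruct (H2 t Ht) as [q [? ?]]; exists q; split; auto; apply in_or_app; auto.
Qed.

Lemma fin_prod {T} (P Q : ere T -> Prop) (f : ere T -> ere T -> ere T) :
  (forall a a' b b', sim a a' -> sim b b' -> sim (f a b) (f a' b')) ->
  fin_sim P -> fin_sim Q -> fin_sim (fun t => exists a b, P a /\ Q b /\ sim t (f a b)).
Proof.
  intros Hf [L1 H1] [L2 H2]. exists (flat_map (fun a => map (f a) L2) L1).
  intros t [a [b [Pa [Qb Ht]]]].
  destruct (H1 a Pa) as [a' [Ia Sa]]. destruct (H2 b Qb) as [b' [Ib Sb]].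
  exists (f a' b'); split.
  - apply in_flat_map; exists a'; split; auto; apply in_map; auto.
  - eapply sim_trans; eauto.
Qed.

Lemma fin_sums {T} (P : ere T -> Prop) : fin_sim P ->
  fin_sim (fun t => exists l, Forall P l /\ sim t (sumL l)).
Proof.
  intros [L HL]. exists (map sumL (sublists L)).
  intros t [l [Hl Ht]].
  assert (Hr : exists l', Forall2 sim l l' /\ incl l' L).
  { clear Ht. induction Hl as [|x l Px Hl IH].
    - exists []; split; [constructor| intros y []].
    - destruct IH as [l' [H1 H2]]. destruct (HL x Px) as [q [Iq Sq]].
      exists (q :: l'); split; [constructor; auto|].
      intros y [<-|Hy]; auto. }
  destruct Hr as [l' [H1 H2]].
  destruct (sublists_sel L (fun y => In y l')) as [m [Hm Hy]].
  exists (sumL m); split; [apply in_map; auto|].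
  eapply sim_trans; [apply Ht|]. eapply sim_trans; [apply sumL_congr; eauto|].
  apply sumL_same.
  - intros y Iy; apply Hy; auto.
  - intros y Iy; apply Hy in Iy; tauto.
Qed.

Arguments fin_prod {T} [P Q] f _ _ _.
Arguments fin_sums {T} [P] _.
Arguments fin_or {T} [P Q] _ _.

Inductive reach {T} (r : ere T) : ere T -> Prop :=
| reach_refl : reach r r
| reach_step t pos B : reach r t -> (exists x, B x) -> reach r (der pos B t).

Lemma reach_Eps {T} (t : ere T) : reach Eps t -> In t [Eps; Lit lit0].
Proof.
  induction 1; simpl; auto. destruct IHreach as [<-|[<-|[]]]; [simpl; auto|].
  rewrite der_lit0; simpl; auto.
Qed.

Lemma reach_Lit {T} (A : lit T) t : reach (Lit A) t -> In t [Lit A; Eps; Lit lit0].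
Proof.
  induction 1; simpl; auto. destruct IHreach as [<-|[<-|[<-|[]]]].
  - simpl; destruct pos; destruct pdec; simpl; auto.
  - simpl; auto.
  - rewrite der_lit0; simpl; auto.
Qed.

Lemma reach_bin {T} (c : ere T -> ere T -> ere T) r s t :
  (forall pos B a b, der pos B (c a b) = c (der pos B a) (der pos B b)) ->
  reach (c r s) t -> exists a b, reach r a /\ reach s b /\ t = c a b.
Proof.
  intros Hc H. induction H.
  - exists r, s; repeat split; constructor.
  - destruct IHreach as [a [b [Ha [Hb Ht]]]]. subst t.
    exists (der pos B a), (der pos B b); repeat split; try (constructor; auto).
    apply Hc.
Qed.

Lemma reach_Neg {T} (r : ere T) t : reach (Neg r) t -> exists a, reach r a /\ t = Neg a.
Proof.
  induction 1.
  - exists r; split; auto; constructor.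
  - destruct IHreach as [a [Ha ->]]. exists (der (negb pos) B a); split; auto.
    constructor; auto.
Qed.

Lemma reach_Cat {T} (r s : ere T) t : reach (Cat r s) t ->
  exists a l, reach r a /\ Forall (reach s) l /\ sim t (Plus (Cat a s) (sumL l)).
Proof.
  induction 1.
  - exists r, []; split; [constructor|split; [constructor|]]. simpl. apply sim_sym, sim_unit.
  - destruct IHreach as [a [l [Ha [Hl Ht]]]].
    assert (Hd := der_sim Ht pos H0). simpl in Hd. rewrite der_sumL in Hd by auto.
    destruct (nu a).
    + exists (der pos B a), (der pos B s :: map (der pos B) l); repeat split.
      * constructor; auto.
      * constructor; [constructor; auto; constructor|].
        apply Forall_map. eapply Forall_impl; [|exact Hl]. intros; constructor; auto.
      * eapply sim_trans; [exact Hd|]. simpl. apply sim_assoc.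
    + exists (der pos B a), (map (der pos B) l); repeat split.
      * constructor; auto.
      * apply Forall_map. eapply Forall_impl; [|exact Hl]. intros; constructor; auto.
      * exact Hd.
Qed.

Lemma reach_Star {T} (r : ere T) t : reach (Star r) t ->
  t = Star r \/ exists l, Forall (reach r) l /\ sim t (sumL (map (fun x => Cat x (Star r)) l)).
Proof.
  induction 1.
  - auto.
  - right. destruct IHreach as [->|[l [Hl Ht]]].
    + exists [der pos B r]; split. constructor; [constructor; auto; constructor|constructor].
      simpl. apply sim_sym, sim_unit.
    + set (f := fun x => if nu x then [der pos B x; der pos B r] else [der pos B x]).
      exists (flat_map f l); split.
      * apply Forall_forall; intros y Hy. apply in_flat_map in Hy. destruct Hy as [x [Hx Hy]].
        rewrite Forall_forall in Hl. specialize (Hl x Hx). unfold f in Hy.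
        destruct (nu x); simpl in Hy; destruct Hy as [<-|Hy]; try (constructor; auto; fail);
          try destruct Hy as [<-|[]]; try destruct Hy; constructor; auto; constructor.
      * eapply sim_trans; [apply (der_sim Ht pos H0)|]. rewrite der_sumL by auto.
        clear Hl Ht. induction l as [|x l IH]; simpl; [apply sim_refl|].
        rewrite map_app. eapply sim_trans; [|apply sim_sym, sumL_app].
        apply sim_Plus; auto. unfold f. destruct (nu x); simpl.
        -- apply sim_Plus; [apply sim_refl|apply sim_sym, sim_unit].
        -- apply sim_sym, sim_unit.
Qed.

Arguments reach_bin {T} c [r s t] _ _.
Arguments reach_Cat {T} [r s t] _.
Arguments reach_Star {T} [r t] _.
Arguments reach_Neg {T} [r t] _.

Lemma good {T} (r : ere T) : fin_sim (reach r).
Proof.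
  induction r.
  - eapply fin_mono; [|apply fin_list]. apply reach_Eps.
  - eapply fin_mono; [|apply fin_list]. apply reach_Lit.
  - eapply fin_mono; [|apply (fin_prod (@Plus T) ltac:(intros; apply sim_Plus; auto) IHr1 IHr2)].
    + intros t Ht. destruct (reach_bin (@Plus T) (fun _ _ _ _ => eq_refl) Ht) as [a [b [? [? ->]]]].
      exists a, b; repeat split; auto; apply sim_refl.
  - eapply fin_mono; [|apply (fin_prod (fun a b => Plus (Cat a r2) b) ltac:(intros; apply sim_Plus; auto; apply sim_Cat; auto; apply sim_refl) IHr1 (fin_sums IHr2))].
    + intros t Ht. destruct (reach_Cat Ht) as [a [l [? [? ?]]]].
      exists a, (sumL l); repeat split; auto. exists l; split; auto; apply sim_refl.
  - set (Q := fun y => exists a b, reach r a /\ In b [@Eps T] /\ sim y (Cat a (Star r))).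
    assert (HQ : fin_sim Q).
    { apply (fin_prod (fun a (b : ere T) => Cat a (Star r)) ltac:(intros; apply sim_Cat; auto; apply sim_refl) IHr (fin_list _)). }
    eapply fin_mono; [|apply (fin_or (fin_list [Star r]) (fin_sums HQ))].
    intros t Ht. destruct (reach_Star Ht) as [->|[l [Hl Ht']]].
    + left; simpl; auto.
    + right. exists (map (fun x => Cat x (Star r)) l); split; auto.
      apply Forall_map. eapply Forall_impl; [|exact Hl]. intros a Ha.
      exists a, Eps; repeat split; simpl; auto; apply sim_refl.
  - eapply fin_mono; [|apply (fin_prod (@And T) ltac:(intros; apply sim_And; auto) IHr1 IHr2)].
    + intros t Ht. destruct (reach_bin (@And T) (fun _ _ _ _ => eq_refl) Ht) as [a [b [? [? ->]]]].
      exists a, b; repeat split; auto; apply sim_refl.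
  - eapply fin_mono; [|apply (fin_prod (fun a (b : ere T) => Neg a) ltac:(intros; apply sim_Neg; auto) IHr (fin_list [@Eps T]))].
    + intros t Ht. destruct (reach_Neg Ht) as [a [? ->]].
      exists a, Eps; repeat split; simpl; auto; apply sim_refl.
Qed.

Lemma nonempty_lit {T} (A : lit T) : A <> lit0 -> exists x, A x.
Proof.
  intros H. apply NNPP; intros Hn. apply H. apply functional_extensionality; intros x.
  apply propositional_extensionality; split; [intros Ax; apply Hn; eauto|intros []].
Qed.

Lemma Fiter_reach {T} (r s : ere T) i p : Fiter i (fun q => q = (r, s)) p ->
  reach r (fst p) /\ reach s (snd p).
Proof.
  revert p; induction i; simpl; intros p H.
  - subst; split; constructor.
  - destruct H as [H|[r0 [s0 [A [H [_ [HA ->]]]]]]]; auto.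
    apply IHi in H. simpl in *. destruct H. apply nonempty_lit in HA.
    split; constructor; auto.
Qed.

Theorem theorem5 (T : Type) (U : lit T -> Prop) :
  countable T -> literal_family U ->
  forall r s : ere T, lits_in U r -> lits_in U s ->
  finite_up_to_sim (Funion r s).
Proof.
  intros _ _ r s _ _.
  destruct (good r) as [L1 H1]. destruct (good s) as [L2 H2].
  exists (flat_map (fun a => map (pair a) L2) L1).
  intros p [i Hp]. apply Fiter_reach in Hp. destruct Hp as [Ha Hb].
  destruct (H1 _ Ha) as [a [Ia Sa]]. destruct (H2 _ Hb) as [b [Ib Sb]].
  exists (a, b); repeat split; auto.
  apply in_flat_map; exists a; split; auto; apply in_map; auto.
Qed.
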